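(* Let $a>1$. Then $S_n$, $S_n^+$, $B_1$, $G_4$, $H_4$ has the maximum value of $SEI_a$ among all $n$-vertex trees, unicyclic graphs, bicyclic graphs, tricyclic graphs and tetracyclic graphs, respectively.
   Context: All graphs are finite, simple, undirected and connected. A connected graph with $n$ vertices and $m$ edges is a tree, unicyclic, bicyclic, tricyclic, tetracyclic graph if $m=n-1,n,n+1,n+2,n+3$ respectively. The variable sum exdeg index is $SEI_a(G)=\sum_{uv\in E(G)}(a^{d_u}+a^{d_v})$, $d_u$ the degree of $u$. $S_n$ is the star on $n$ vertices. The following graphs are obtained from $S_n$ by adding edges between leaves: $S_n^+$: add one edge; $B_1$: add two edges sharing a common leaf; $G_4$: join one leaf to three other leaves (exists for $n\ge5$); $H_4$: join one leaf to four other leaves (exists for $n\ge 6$). Each statement is for those $n$ for which the respective graph exists. *)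

(* Defs.v *)
From mathcomp Require Import all_boot all_order all_algebra.
Set Implicit Arguments. Unset Strict Implicit. Unset Printing Implicit Defensive.
Import Order.TTheory GRing.Theory Num.Theory.

Definition simple_graph n (e : rel 'I_n) : Prop :=
  (forall x, ~~ e x x) /\ (forall x y, e x y = e y x).

Definition connected_graph n (e : rel 'I_n) : Prop :=
  forall x y, connect e x y.

Definition nedges n (e : rel 'I_n) : nat :=
  #|[set p : 'I_n * 'I_n | (p.1 < p.2)%N && e p.1 p.2]|.

Definition deg n (e : rel 'I_n) (x : 'I_n) : nat := #|[set y | e x y]|.

Local Open Scope ring_scope.

Definition SEI (R : realFieldType) (a : R) n (e : rel 'I_n) : R :=
  \sum_(p : 'I_n * 'I_n | (p.1 < p.2)%N && e p.1 p.2)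
     (a ^+ deg e p.1 + a ^+ deg e p.2).

(* connected simple graph on n vertices with n - 1 + k edges
   (k = 0,1,2,3,4: tree, unicyclic, bicyclic, tricyclic, tetracyclic) *)
Definition in_class n (k : nat) (e : rel 'I_n) : Prop :=
  simple_graph e /\ connected_graph e /\ nedges e = (n - 1 + k)%N.

(* Star S_n with center 0 and leaves 1..n-1, plus the edges joining leaf 1
   to the leaves 2, ..., k+1. *)
Definition star_join (n : nat) (k : nat) : rel 'I_n :=
  fun x y => (x != y) &&
    [|| (val x == 0)%N, (val y == 0)%N,
        (val x == 1)%N && (2 <= val y <= k.+1)%N
      | (val y == 1)%N && (2 <= val x <= k.+1)%N].

Arguments star_join : clear implicits.
Definition star_graph (n : nat) : rel 'I_n := @star_join n 0.
Definition star_plus (n : nat) : rel 'I_n := @star_join n 1.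
Definition B1_graph (n : nat) : rel 'I_n := @star_join n 2.
Definition G4_graph (n : nat) : rel 'I_n := @star_join n 3.
Definition H4_graph (n : nat) : rel 'I_n := @star_join n 4.

Definition max_SEI_in_class (R : realFieldType) (a : R) n k (e0 : rel 'I_n) : Prop :=
  in_class k e0 /\ forall e : rel 'I_n, in_class k e -> SEI a e <= SEI a e0.
Arguments star_graph : clear implicits.
Arguments star_plus : clear implicits.
Arguments B1_graph : clear implicits.
Arguments G4_graph : clear implicits.
Arguments H4_graph : clear implicits.

(* Main.v *)
Require Import Defs.
From mathcomp Require Import all_boot all_order all_algebra.
From mathcomp Require Import ring lra zify.
Set Implicit Arguments. Unset Strict Implicit. Unset Printing Implicit Defensive.
Import Order.TTheory GRing.Theory Num.Theory.
Local Open Scope ring_scope.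

Definition gg (R : realFieldType) (a : R) (d : nat) : R := d%:R * a ^+ d.

Lemma gg_conv (R : realFieldType) (a : R) (ha : 1 < a) (x : nat) :
  gg a x.+1 - gg a x <= gg a x.+2 - gg a x.+1.
Proof.
rewrite /gg !exprS.
have t0 : 0 <= a ^+ x by apply: exprn_ge0; lra.
have X0 : 0 <= (x%:R : R) by apply: ler0n.
rewrite -subr_ge0.
have -> : x.+2%:R * (a * (a * a ^+ x)) - x.+1%:R * (a * a ^+ x) -
    (x.+1%:R * (a * a ^+ x) - x%:R * a ^+ x) =
    a ^+ x * (x%:R * (a - 1) ^+ 2 + 2 * a * (a - 1)).
  by rewrite !mulrSr; ring.
apply: mulr_ge0 => //.
apply: addr_ge0; first by apply: mulr_ge0 => //; apply: sqr_ge0.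
apply: mulr_ge0; lra.
Qed.


Lemma inc_mono (R : realFieldType) (f : nat -> R)
  (Hc : forall x, f x.+1 - f x <= f x.+2 - f x.+1) (x y : nat) :
  (x <= y)%N -> f x.+1 - f x <= f y.+1 - f y.
Proof.
elim: y => [|y IH]; first by rewrite leqn0 => /eqP ->.
rewrite leq_eqVlt => /orP [/eqP -> // | ]; rewrite ltnS => /IH h.
have := Hc y; lra.
Qed.

Lemma majo (R : realFieldType) (f : nat -> R)
  (Hc : forall x, f x.+1 - f x <= f x.+2 - f x.+1) (x y t : nat) :
  (x <= y)%N -> f (x + t)%N + f y <= f x + f (y + t)%N.
Proof.
move=> xy; elim: t => [|t IH]; first by rewrite !addn0; lra.
have h := inc_mono Hc (_ : (x + t <= y + t)%N).
rewrite !addnS; have := h ltac:(by rewrite leq_add2r); lra.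
Qed.

Lemma lin_low (R : realFieldType) (f : nat -> R)
  (Hc : forall x, f x.+1 - f x <= f x.+2 - f x.+1) (x y s : nat) :
  (x <= y)%N -> s%:R * (f x.+1 - f x) <= f (y + s)%N - f y.
Proof.
move=> xy; elim: s => [|s IH]; first by rewrite addn0 mul0r; lra.
have h : (x <= y + s)%N by apply: leq_trans xy (leq_addr _ _).
have := inc_mono Hc h; rewrite addnS mulrSr; lra.
Qed.

Lemma bucket (R : realFieldType) (f : nat -> R)
  (Hc : forall x, f x.+1 - f x <= f x.+2 - f x.+1) (f0 : f 0%N = 0)
  (T : Type) (C : nat) (I : seq T) (P : pred T) (z : T -> nat) :
  (forall i, P i -> (z i <= C)%N) ->
  exists q r, [/\ (r <= C)%N, (\sum_(i <- I | P i) z i)%N = (q * C + r)%N &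
     \sum_(i <- I | P i) f (z i) <= q%:R * f C + f r].
Proof.
move=> Hz; elim: I => [|i I [q [r [rC Es Ef]]]].
  exists 0%N, 0%N; rewrite !big_nil mul0r f0 add0r; split => //.
rewrite !big_cons; case Pi: (P i); last by exists q, r.
have zi := Hz i Pi.
case: (leqP (r + z i) C) => h.
  exists q, (r + z i)%N; split => //; first by rewrite Es; lia.
  have := majo Hc (z i) (leq0n r); rewrite add0n f0; lra.
exists q.+1, (r + z i - C)%N; split; first by lia.
  by rewrite Es; lia.
have hx : (r + z i - C <= r)%N by lia.
have := majo Hc (C - r) hx.
have -> : (r + z i - C + (C - r))%N = z i by lia.
have -> : (r + (C - r))%N = C by lia.
rewrite mulrSr; lra.
Qed.

Definition dS N (e : rel 'I_N) (S : {set 'I_N}) (v : 'I_N) : nat :=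
  #|[set y in S | e v y]|.

Definition ConnS N (e : rel 'I_N) (S : {set 'I_N}) : Prop :=
  forall A : {set 'I_N}, A \subset S -> A != set0 -> A != S ->
    exists x y, [/\ x \in A, y \in S :\: A & e x y].

Lemma dS_le N (e : rel 'I_N) (Hirr : forall x, ~~ e x x) (S : {set 'I_N}) v :
  v \in S -> (dS e S v <= #|S| - 1)%N.
Proof.
move=> vS.
have sub : [set y in S | e v y] \subset S :\ v.
  apply/subsetP => y; rewrite !inE => /andP [yS evy]; rewrite yS andbT.
  apply/eqP => yv; subst y; by rewrite (negbTE (Hirr _)) in evy.
apply: leq_trans (subset_leq_card sub) _.
by rewrite [in X in (_ <= X - _)%N](cardsD1 v S) vS add1n subn1.
Qed.

Lemma sum_dS_le N (e : rel 'I_N) (Hirr : forall x, ~~ e x x) (S : {set 'I_N}) :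
  (\sum_(v in S) dS e S v <= #|S| * (#|S| - 1))%N.
Proof.
rewrite -sum_nat_const; apply: leq_sum => v vS; exact: dS_le.
Qed.

Lemma conn_deg1 N (e : rel 'I_N) (S : {set 'I_N}) v :
  ConnS e S -> (1 < #|S|)%N -> v \in S -> (0 < dS e S v)%N.
Proof.
move=> HC S2 vS.
have h1 : [set v] \subset S by rewrite sub1set.
have h2 : [set v] != set0 by apply/set0Pn; exists v; rewrite inE.
have h3 : [set v] != S by apply/eqP => Sv; move: S2; rewrite -Sv cards1.
have [x [y [xA yS exy]]] := HC _ h1 h2 h3.
move: xA; rewrite inE => /eqP xv; subst x.
apply/card_gt0P; exists y; rewrite !inE exy andbT.
by move: yS; rewrite inE => /andP [].
Qed.

Lemma leaf_nb N (e : rel 'I_N) (Hirr : forall x, ~~ e x x) (S : {set 'I_N}) w :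
  w \in S -> dS e S w = 1%N ->
  exists u, [/\ u \in S, u != w, e w u & forall y, y \in S -> e w y -> y = u].
Proof.
move=> wS /eqP /cards1P [u Hu].
have : u \in [set y in S | e w y] by rewrite Hu inE.
rewrite inE => /andP [uS ewu].
exists u; split => //.
  apply/eqP => uw; subst u; by rewrite (negbTE (Hirr _)) in ewu.
move=> y yS ewy.
have : y \in [set y in S | e w y] by rewrite inE yS ewy.
by rewrite Hu inE => /eqP.
Qed.

Lemma dS_rem_other N (e : rel 'I_N) (Hsym : forall x y, e x y = e y x) (S : {set 'I_N}) w u v :
  (forall y, y \in S -> e w y -> y = u) -> v \in S -> v != u ->
  dS e (S :\ w) v = dS e S v.
Proof.
move=> Hu vS vu; rewrite /dS; apply: eq_card => y; rewrite !inE.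
case: (eqVneq y w) => [->|] //=.
case evw: (e v w); last by rewrite andbF.
rewrite Hsym in evw.
by rewrite (Hu v vS evw) eqxx in vu.
Qed.

Lemma dS_rem_u N (e : rel 'I_N) (Hsym : forall x y, e x y = e y x) (S : {set 'I_N}) w u :
  w \in S -> e w u -> dS e S u = (dS e (S :\ w) u).+1.
Proof.
move=> wS ewu; rewrite /dS.
have -> : [set y in S | e u y] = w |: [set y in S :\ w | e u y].
  apply/setP => y; rewrite !inE; case: (eqVneq y w) => [->|] //=.
  by rewrite wS Hsym ewu.
by rewrite cardsU1 !inE eqxx.
Qed.

Lemma leaf_sum_nat N (e : rel 'I_N) (Hsym : forall x y, e x y = e y x) (S : {set 'I_N}) w u :
  w \in S -> dS e S w = 1%N -> u \in S -> u != w -> e w u ->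
  (forall y, y \in S -> e w y -> y = u) ->
  (\sum_(v in S) dS e S v = (\sum_(v in S :\ w) dS e (S :\ w) v) + 2)%N.
Proof.
move=> wS w1 uS uw ewu Hu.
have uS' : u \in S :\ w by rewrite !inE uw.
rewrite (big_setD1 w wS) /= w1 (big_setD1 u uS') /= [in RHS](big_setD1 u uS') /=.
rewrite (dS_rem_u Hsym wS ewu).
rewrite (eq_bigr (fun v => dS e (S :\ w) v)); first by lia.
move=> v; rewrite !inE => /andP [vu /andP [vw vS]].
by rewrite (dS_rem_other Hsym Hu vS vu).
Qed.

Lemma leaf_sum_R (R : realFieldType) (F : nat -> R) N (e : rel 'I_N)
  (Hsym : forall x y, e x y = e y x) (S : {set 'I_N}) w u :
  w \in S -> dS e S w = 1%N -> u \in S -> u != w -> e w u ->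
  (forall y, y \in S -> e w y -> y = u) ->
  \sum_(v in S) F (dS e S v) = F 1%N + \sum_(v in S :\ w) F (dS e (S :\ w) v)
      + (F (dS e (S :\ w) u).+1 - F (dS e (S :\ w) u)).
Proof.
move=> wS w1 uS uw ewu Hu.
have uS' : u \in S :\ w by rewrite !inE uw.
rewrite (big_setD1 w wS) /= w1 (big_setD1 u uS') /= [in RHS](big_setD1 u uS') /=.
rewrite (dS_rem_u Hsym wS ewu).
rewrite (eq_bigr (fun v => F (dS e (S :\ w) v))); first by lra.
move=> v; rewrite !inE => /andP [vu /andP [vw vS]].
by rewrite (dS_rem_other Hsym Hu vS vu).
Qed.

Lemma leaf_conn N (e : rel 'I_N) (Hsym : forall x y, e x y = e y x) (S : {set 'I_N}) w u :
  w \in S -> u \in S -> u != w -> (forall y, y \in S -> e w y -> y = u) ->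
  ConnS e S -> ConnS e (S :\ w).
Proof.
move=> wS uS uw Hu HC A AS' A0 AS'n.
have AS : A \subset S by apply: subset_trans AS' (subsetDl _ _).
have wA : w \notin A.
  apply/negP => wA; move/subsetP: AS' => /(_ w wA); by rewrite !inE eqxx.
have [z zS' zA] : exists2 z, z \in S :\ w & z \notin A.
  apply/subsetPn; apply: contra AS'n => h; by rewrite eqEsubset AS' h.
have AnS : A != S by apply: contraNneq wA => ->.
have [x [y [xA yS exy]]] := HC A AS A0 AnS.
move: yS; rewrite inE => /andP [yA yS].
case: (eqVneq y w) => [yw|ynw]; last first.
  by exists x, y; split => //; rewrite !inE ynw yA yS.
subst y.
have xS : x \in S by apply: (subsetP AS).
have xu : x = u by apply: Hu => //; rewrite Hsym.
subst x.
have A'S : w |: A \subset S.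
  apply/subsetP => t; rewrite !inE => /orP [/eqP -> //|tA]; exact: (subsetP AS).
have A'0 : w |: A != set0 by apply/set0Pn; exists w; rewrite !inE eqxx.
have A'n : w |: A != S.
  apply/negP => /eqP E; move: zS'; rewrite !inE => /andP [zw zS].
  move: zS; rewrite -E !inE (negbTE zw) /=; by rewrite (negbTE zA).
have [x' [y' [x'A y'S ex'y']]] := HC _ A'S A'0 A'n.
move: y'S; rewrite !inE negb_or => /andP [/andP [y'w y'A] y'S].
move: x'A; rewrite !inE => /orP [/eqP x'w|x'A].
  subst x'; have := Hu y' y'S ex'y' => y'u; subst y'; by rewrite xA in y'A.
by exists x', y'; split => //; rewrite !inE y'w y'A y'S.
Qed.

Definition chi (R : realFieldType) (a : R) (z : nat) : R := gg a z.+2 - gg a 2.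

Lemma chi_conv (R : realFieldType) (a : R) (ha : 1 < a) x :
  chi a x.+1 - chi a x <= chi a x.+2 - chi a x.+1.
Proof. rewrite /chi; have := gg_conv ha x.+2; lra. Qed.

Lemma leafless (R : realFieldType) (a : R) (ha : 1 < a) N (e : rel 'I_N)
  (Hirr : forall x, ~~ e x x) (S : {set 'I_N}) (k : nat) :
  (1 < #|S|)%N -> ConnS e S ->
  (\sum_(v in S) dS e S v = 2 * (#|S| - 1 + k))%N ->
  (forall v, v \in S -> dS e S v != 1%N) ->
  exists q r, [/\ (r <= #|S| - 3)%N, (q * (#|S| - 3) + r = 2 * k - 2)%N, (1 <= k)%N &
   \sum_(v in S) gg a (dS e S v) <= #|S|%:R * gg a 2 + q%:R * chi a (#|S| - 3) + chi a r].
Proof.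
move=> S2 HC Hsum Hnl.
have d2 : forall v, v \in S -> (2 <= dS e S v)%N.
  move=> v vS; have h1 := conn_deg1 HC S2 vS; have /eqP h2 := Hnl v vS; move: h1 h2; set d := dS e S v; lia.
have dle : forall v, v \in S -> (dS e S v - 2 <= #|S| - 3)%N.
  move=> v vS; have := dS_le Hirr vS; set d := dS e S v; clear; move: d => d. lia.
have chi0 : chi a 0 = 0 by rewrite /chi subrr.
have [q [r [rC Es Ef]]] := @bucket R (chi a) (chi_conv ha) chi0 _ (#|S| - 3)%N (index_enum 'I_N)
   (fun v => v \in S) (fun v => dS e S v - 2)%N dle.
have Esum : (\sum_(v in S) dS e S v = \sum_(v in S) (dS e S v - 2) + 2 * #|S|)%N.
  rewrite (eq_bigr (fun v => (dS e S v - 2) + 2)%N); last first.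
    by move=> v vS; have := d2 v vS; lia.
  by rewrite big_split /= sum_nat_const mulnC.
have Ereal : \sum_(v in S) gg a (dS e S v) =
    \sum_(v in S) (gg a 2 + chi a (dS e S v - 2)).
  apply: eq_bigr => v vS; rewrite /chi.
  have -> : (dS e S v - 2).+2 = dS e S v by have := d2 v vS; lia.
  by rewrite addrC subrK.
exists q, r; split => //.
- move: Es; rewrite -/(\sum_(v in S) (dS e S v - 2))%N => Es.
  rewrite Es in Esum; rewrite Esum in Hsum; lia.
- move: Es; rewrite -/(\sum_(v in S) (dS e S v - 2))%N => Es.
  rewrite Es in Esum; rewrite Esum in Hsum.
  case: k Hsum => [|k]; last by [].
  have : (0 < #|S|)%N by lia.
  lia.
rewrite Ereal big_split /= sumr_const -mulr_natl.
move: Ef; rewrite -/(\sum_(v in S) chi a (dS e S v - 2)) => Ef; lra.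
Qed.

Lemma main_ind (R : realFieldType) (a : R) (ha : 1 < a) N (e : rel 'I_N)
  (Hirr : forall x, ~~ e x x) (Hsym : forall x y, e x y = e y x) (k n1 : nat) (B : nat -> R)
  (Hvac : forall S : {set 'I_N}, #|S| = n1.-1 -> S != set0 ->
      (\sum_(v in S) dS e S v = 2 * (#|S| - 1 + k))%N -> False)
  (Hstep : forall n, (n1 < n)%N -> B n.-1 + gg a 1 + (gg a n.-1 - gg a n.-2) <= B n)
  (Hleafless : forall S : {set 'I_N}, (n1 <= #|S|)%N -> ConnS e S ->
      (\sum_(v in S) dS e S v = 2 * (#|S| - 1 + k))%N ->
      (forall v, v \in S -> dS e S v != 1%N) ->
      \sum_(v in S) gg a (dS e S v) <= B #|S|) :
  forall S : {set 'I_N}, (n1 <= #|S|)%N -> ConnS e S ->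
      (\sum_(v in S) dS e S v = 2 * (#|S| - 1 + k))%N ->
      \sum_(v in S) gg a (dS e S v) <= B #|S|.
Proof.
move=> S; move Hn: #|S| => n; elim: n S Hn => [|n IH] S Hn Hn1 HC Hs.
  rewrite -Hn; apply: Hleafless; rewrite ?Hn //.
  move=> v vS; have : (0 < #|S|)%N by apply/card_gt0P; exists v.
  by rewrite Hn.
case: (boolP [exists w in S, dS e S w == 1%N]) => [/exists_inP [w wS /eqP w1]|Hno]; last first.
  rewrite -Hn; apply: Hleafless; rewrite ?Hn //.
  move=> v vS; apply/negP => /eqP v1; move/negP: Hno; apply.
  by apply/exists_inP; exists v => //; apply/eqP.
have [u [uS uw ewu Hu]] := leaf_nb Hirr wS w1.
have uS' : u \in S :\ w by rewrite !inE uw.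
have cS' : #|S :\ w| = n.
  by move: Hn; rewrite (cardsD1 w S) wS add1n => -[].
have n1' : (1 <= n)%N by rewrite -cS'; apply/card_gt0P; exists u.
have HsumS := leaf_sum_nat Hsym wS w1 uS uw ewu Hu.
have Hs' : (\sum_(v in S :\ w) dS e (S :\ w) v = 2 * (#|S :\ w| - 1 + k))%N.
  rewrite cS'; rewrite HsumS in Hs; move: Hs n1'; clear; lia.
have HC' := leaf_conn Hsym wS uS uw Hu HC.
rewrite (leaf_sum_R (gg a) Hsym wS w1 uS uw ewu Hu).
have du : (dS e (S :\ w) u <= n.-1)%N.
  have := dS_le Hirr uS'; rewrite cS'; lia.
have hinc := inc_mono (gg_conv ha) du.
move: hinc; have -> : (n.-1).+1 = n by lia.
move=> hinc.
case: (leqP n1 n) => hn1.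
  have Hs'' := Hs'; rewrite cS' in Hs''.
  have hI := IH _ cS' hn1 HC' Hs''.
  have := Hstep n.+1 ltac:(lia); rewrite /= => hS.
  lra.
exfalso; apply: (Hvac (S :\ w)).
- rewrite cS'; lia.
- by apply/set0Pn; exists u.
- exact: Hs'.
Qed.

Lemma conn_setT N (e : rel 'I_N) : (forall x y, connect e x y) -> ConnS e setT.
Proof.
move=> Hc A _ A0 AT.
have [x xA] := set0Pn _ A0.
have [y _ yA] : exists2 y, y \in setT & y \notin A.
  apply/subsetPn; apply: contra AT => h; by rewrite eqEsubset subsetT.
case: (boolP [exists x, exists y, [&& x \in A, y \in setT :\: A & e x y]]).
  by move=> /existsP [x' /existsP [y' /and3P [h1 h2 h3]]]; exists x', y'.
move=> Hno.
have clo : forall x' y', x' \in A -> e x' y' -> y' \in A.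
  move=> x' y' x'A ex'y'; apply/negPn/negP => y'A; move/negP: Hno; apply.
  apply/existsP; exists x'; apply/existsP; exists y'.
  by rewrite x'A !inE y'A ex'y'.
exfalso; move/negP: yA; apply.
have /connectP [p pth ->] := Hc x y.
elim: p x xA pth => [|z p IHp] x0 x0A //=.
move=> /andP [ex0z pth]; apply: IHp pth; exact: clo ex0z.
Qed.

Lemma dc_core (V : nmodType) N (e : rel 'I_N) (Hirr : forall x, ~~ e x x)
  (Hsym : forall x y, e x y = e y x) (F : 'I_N -> V) :
  \sum_(p : 'I_N * 'I_N | (p.1 < p.2)%N && e p.1 p.2) (F p.1 + F p.2) =
  \sum_(v : 'I_N) F v *+ deg e v.
Proof.
have E1 : \sum_(v : 'I_N) F v *+ deg e v = \sum_(p : 'I_N * 'I_N | e p.1 p.2) F p.1.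
  transitivity (\sum_(v : 'I_N) \sum_(y : 'I_N | e v y) F v).
    apply: eq_bigr => v _.
    rewrite (eq_bigl (fun y => y \in [set y | e v y])) => [|y]; last by rewrite inE.
    by rewrite sumr_const.
  by rewrite pair_big_dep.
rewrite E1 big_split /=.
have inj : injective (fun p : 'I_N * 'I_N => (p.2, p.1)) by move=> [? ?] [? ?] [-> ->].
rewrite [X in _ + X = _](reindex_inj inj) /=.
rewrite [RHS](bigID (fun p : 'I_N * 'I_N => (p.1 < p.2)%N)) /=.
congr (_ + _); first by apply: eq_bigl => p; rewrite andbC.
apply: eq_bigl => p; rewrite Hsym.
case ep: (e p.1 p.2); rewrite ?andbF ?andbT //.
rewrite -leqNgt ltn_neqAle.
have -> : (nat_of_ord p.2 != nat_of_ord p.1) = true.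
  apply/negP => /eqP h; have hp : p.2 = p.1 by apply: val_inj.
  by rewrite hp (negbTE (Hirr _)) in ep.
by [].
Qed.

Lemma SEI_sum (R : realFieldType) (a : R) N (e : rel 'I_N) (Hirr : forall x, ~~ e x x)
  (Hsym : forall x y, e x y = e y x) :
  SEI a e = \sum_(v : 'I_N) (deg e v)%:R * a ^+ deg e v.
Proof.
rewrite /SEI (dc_core Hirr Hsym (fun v => a ^+ deg e v)).
by apply: eq_bigr => v _; rewrite mulr_natl.
Qed.

Lemma handshake N (e : rel 'I_N) (Hirr : forall x, ~~ e x x)
  (Hsym : forall x y, e x y = e y x) :
  (\sum_(v : 'I_N) deg e v = 2 * nedges e)%N.
Proof.
have H := dc_core (V := nat) Hirr Hsym (fun _ => 1%N).
have E : (\sum_(p : 'I_N * 'I_N | (p.1 < p.2)%N && e p.1 p.2) (1 + 1)%N = nedges e * 2)%N.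
  rewrite /nedges -sum_nat_const.
  by apply: eq_bigl => p; rewrite inE.
rewrite mulnC -E H.
by apply: eq_bigr => v _; rewrite /= -[LHS]natn.
Qed.

Definition Tb (R : realFieldType) (a : R) (k n : nat) : R :=
  gg a n.-1 + gg a k.+1 + k%:R * gg a 2 + (n - 2 - k)%:R * gg a 1.

Lemma Tb_eq (R : realFieldType) (a : R) k s :
  Tb a k (k.+2 + s) = gg a (k.+1 + s) + gg a k.+1 + k%:R * gg a 2 + s%:R * gg a 1.
Proof.
rewrite /Tb; have -> : (k.+2 + s - 2 - k)%N = s by lia.
by rewrite addSn.
Qed.

Lemma Tb_step (R : realFieldType) (a : R) k n :
  (k.+2 < n)%N -> Tb a k n.-1 + gg a 1 + (gg a n.-1 - gg a n.-2) = Tb a k n.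
Proof.
move=> h; have [s ->] : exists s, n = (k.+2 + s.+1)%N by exists (n - k.+3)%N; lia.
have -> : (k.+2 + s.+1).-1 = (k.+2 + s)%N by lia.
rewrite !Tb_eq.
have -> : (k.+2 + s).-1 = (k.+1 + s)%N by lia.
have -> : (k.+1 + s.+1)%N = (k.+2 + s)%N by lia.
rewrite mulrSr; lra.
Qed.

Lemma gg_ge0 (R : realFieldType) (a : R) (ha : 1 < a) n : 0 <= gg a n.
Proof. rewrite /gg; apply: mulr_ge0; first exact: ler0n. apply: exprn_ge0; lra. Qed.

Lemma uncapped (R : realFieldType) (a : R) (ha : 1 < a) k n q r :
  (1 <= k)%N -> (2 * k + 1 <= n)%N -> (r <= n - 3)%N -> (q * (n - 3) + r = 2 * k - 2)%N ->
  n%:R * gg a 2 + q%:R * chi a (n - 3) + chi a r <= Tb a k n.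
Proof.
move=> k1 hn hr hq.
have chi0 : chi a 0 = 0 by rewrite /chi subrr.
rewrite -addrA.
have -> : q%:R * chi a (n - 3) + chi a r = chi a (2 * k - 2).
  case: q hq => [|[|q]] hq.
  - rewrite mul0r add0r; congr chi; lia.
  - have h1 : r = 0%N by lia.
    have h2 : (n - 3 = 2 * k - 2)%N by lia.
    by rewrite h1 h2 chi0 mul1r addr0.
  - have h1 : (n - 3 = 0)%N by nia.
    have h2 : r = 0%N by nia.
    have h3 : (2 * k - 2 = 0)%N by nia.
    by rewrite h1 h2 h3 chi0 mulr0 addr0.
rewrite /chi.
have [k' Ek] : exists k', k = k'.+1 by exists k.-1; lia.
subst k.
have [s Es] : exists s, n = (k'.+3 + k' + s)%N by exists (n - k'.+3 - k')%N; lia.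
subst n.
have -> : (2 * k'.+1 - 2).+2 = (k'.+2 + k')%N by lia.
have E : (k'.+3 + k' + s = k'.+1.+2 + (k' + s))%N by lia.
rewrite E Tb_eq.
have c := gg_conv ha.
have l1 := lin_low c s (_ : (1 <= k'.+2 + k')%N).
have l2 := lin_low c k'.+1 (leqnn 1).
have -> : (k'.+1.+1 + (k' + s))%N = (k'.+2 + k' + s)%N by lia.
have -> : (k'.+1.+2 + (k' + s))%N = ((k'.+2 + k').+1 + s)%N by lia.
move: (l1 isT) l2; rewrite !add1n.
have -> : ((k'.+3 + k' + s)%:R : R) = 3%:R + k'%:R + k'%:R + s%:R.
  by rewrite -!natrD; congr _%:R; lia.
rewrite mulrSr; lra.
Qed.

Lemma boundk (R : realFieldType) (a : R) (ha : 1 < a) N (e : rel 'I_N)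
  (Hirr : forall x, ~~ e x x) (Hsym : forall x y, e x y = e y x) (k n1 : nat) (B : nat -> R)
  (Hvac : n1.-1 = 0%N \/ (n1.-1 * (n1.-1 - 1) < 2 * (n1.-1 - 1 + k))%N)
  (Hstep : forall n, (n1 < n)%N -> B n.-1 + gg a 1 + (gg a n.-1 - gg a n.-2) <= B n)
  (Hsmall : forall n, (n1 <= n)%N -> (n <= 1)%N -> 0 <= B n)
  (Hlf : forall n q r, (n1 <= n)%N -> (1 < n)%N -> (r <= n - 3)%N ->
      (q * (n - 3) + r = 2 * k - 2)%N -> (1 <= k)%N ->
      n%:R * gg a 2 + q%:R * chi a (n - 3) + chi a r <= B n) :
  forall S : {set 'I_N}, (n1 <= #|S|)%N -> ConnS e S ->
      (\sum_(v in S) dS e S v = 2 * (#|S| - 1 + k))%N ->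
      \sum_(v in S) gg a (dS e S v) <= B #|S|.
Proof.
apply: (main_ind ha Hirr Hsym) => //.
- move=> S hS S0 hsum; case: Hvac => hv.
    by move: S0; rewrite -cards_eq0 hS hv.
  have := sum_dS_le Hirr S; rewrite hsum hS; lia.
- move=> S hn HC hs hnl; case: (leqP #|S| 1) => h.
    rewrite big1; first exact: Hsmall.
    move=> v vS; have := dS_le Hirr vS.
    have -> : (#|S| - 1 = 0)%N by lia.
    by rewrite leqn0 => /eqP ->; rewrite /gg mul0r.
  have [q [r [h1 h2 h3 h4]]] := leafless ha Hirr h HC hs hnl.
  apply: le_trans h4 _; exact: Hlf.
Qed.

Ltac natsimpl := repeat match goal with
  |- context [ subn ?x ?y ] =>
     let z := eval vm_compute in (subn x y) in
     rewrite (_ : subn x y = z); last by []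
  end.

Ltac convex_close a ha :=
  rewrite /Tb /chi /=; natsimpl;
  have c0 := gg_conv ha 0; have c1 := gg_conv ha 1; have c2 := gg_conv ha 2;
  have c3 := gg_conv ha 3; have c4 := gg_conv ha 4; have c5 := gg_conv ha 5;
  have c6 := gg_conv ha 6; have c7 := gg_conv ha 7;
  have g0 : gg a 0 = 0; [by rewrite /gg mul0r | lra].


Lemma poly3 (R : realFieldType) (a : R) (ha : 1 < a) :
  4%:R * gg a 3 + gg a 1 + (gg a 4 - gg a 3) <= Tb a 3 5.
Proof.
rewrite /Tb /=; natsimpl; rewrite /gg.
have h : 0 <= a * ((a - 1) ^+ 2 * (4 * a - 1)).
  apply: mulr_ge0; first lra.
  apply: mulr_ge0; [exact: sqr_ge0 | lra].
rewrite !exprS expr0 !mulr1 in h *; lra.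
Qed.

Lemma poly4 (R : realFieldType) (a : R) (ha : 1 < a) :
  (3%:R * gg a 4 + 2%:R * gg a 2) + gg a 1 + (gg a 5 - gg a 4) <= Tb a 4 6.
Proof.
rewrite /Tb /=; natsimpl; rewrite /gg.
have h : 0 <= a * ((a - 1) ^+ 2 * (5 * a * a + 2 * a - 1)).
  apply: mulr_ge0; first lra.
  apply: mulr_ge0; first exact: sqr_ge0.
  have : 0 <= a * a - 1 by nra.
  nra.
rewrite !exprS expr0 !mulr1 in h *; lra.
Qed.

Definition B0 (R : realFieldType) (a : R) (n : nat) : R := gg a n.-1 + n.-1%:R * gg a 1.
Definition B3 (R : realFieldType) (a : R) (n : nat) : R :=
  if n == 4%N then 4%:R * gg a 3 else Tb a 3 n.
Definition B4 (R : realFieldType) (a : R) (n : nat) : R :=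
  if n == 5%N then 3%:R * gg a 4 + 2%:R * gg a 2 else Tb a 4 n.


Lemma bound0 (R : realFieldType) (a : R) (ha : 1 < a) N (e : rel 'I_N)
  (Hirr : forall x, ~~ e x x) (Hsym : forall x y, e x y = e y x) :
  forall S : {set 'I_N}, (1 <= #|S|)%N -> ConnS e S ->
      (\sum_(v in S) dS e S v = 2 * (#|S| - 1 + 0))%N ->
      \sum_(v in S) gg a (dS e S v) <= B0 a #|S|.
Proof.
apply: (boundk ha Hirr Hsym); first by left.
- move=> n hn; have [m ->] : exists m, n = m.+2 by exists n.-2; lia.
  rewrite /B0 /= mulrSr; lra.
- move=> n _ _; rewrite /B0; apply: addr_ge0; first exact: gg_ge0.
  apply: mulr_ge0; [exact: ler0n | exact: gg_ge0].
- by [].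
Qed.

Lemma bound1 (R : realFieldType) (a : R) (ha : 1 < a) N (e : rel 'I_N)
  (Hirr : forall x, ~~ e x x) (Hsym : forall x y, e x y = e y x) :
  forall S : {set 'I_N}, (3 <= #|S|)%N -> ConnS e S ->
      (\sum_(v in S) dS e S v = 2 * (#|S| - 1 + 1))%N ->
      \sum_(v in S) gg a (dS e S v) <= Tb a 1 #|S|.
Proof.
apply: (boundk ha Hirr Hsym); first by right.
- by move=> n hn; rewrite Tb_step.
- move=> n; lia.
- move=> n q r h1 h2 h3 h4 h5; apply: uncapped => //; lia.
Qed.

Lemma bound2 (R : realFieldType) (a : R) (ha : 1 < a) N (e : rel 'I_N)
  (Hirr : forall x, ~~ e x x) (Hsym : forall x y, e x y = e y x) :
  forall S : {set 'I_N}, (4 <= #|S|)%N -> ConnS e S ->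
      (\sum_(v in S) dS e S v = 2 * (#|S| - 1 + 2))%N ->
      \sum_(v in S) gg a (dS e S v) <= Tb a 2 #|S|.
Proof.
apply: (boundk ha Hirr Hsym); first by right.
- by move=> n hn; rewrite Tb_step.
- move=> n; lia.
- move=> n q r h1 h2 h3 h4 h5; case: (leqP 5 n) => h.
    apply: uncapped => //; lia.
  have En : n = 4%N by lia.
  subst n; have : (q = 2 /\ r = 0 \/ q = 1 /\ r = 1)%N by lia.
  by case => [[-> ->]|[-> ->]]; convex_close a ha.
Qed.

Lemma bound3 (R : realFieldType) (a : R) (ha : 1 < a) N (e : rel 'I_N)
  (Hirr : forall x, ~~ e x x) (Hsym : forall x y, e x y = e y x) :
  forall S : {set 'I_N}, (4 <= #|S|)%N -> ConnS e S ->
      (\sum_(v in S) dS e S v = 2 * (#|S| - 1 + 3))%N ->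
      \sum_(v in S) gg a (dS e S v) <= B3 a #|S|.
Proof.
apply: (boundk ha Hirr Hsym); first by right.
- move=> n hn; case: (eqVneq n 5) => [->|n5].
    rewrite /B3 /=; exact: poly3 ha.
  rewrite /B3; have -> : (n.-1 == 4%N) = false by apply/eqP; lia.
  have -> : (n == 4%N) = false by apply/eqP; lia.
  by rewrite Tb_step //; lia.
- move=> n; lia.
- move=> n q r h1 h2 h3 h4 h5; case: (leqP 7 n) => h.
    rewrite /B3; have -> : (n == 4%N) = false by apply/eqP; lia.
    apply: uncapped => //; lia.
  have : (n = 4 \/ n = 5 \/ n = 6)%N by lia.
  case => [En|[En|En]]; subst n; rewrite /B3 /=.
  + have : (q = 4 /\ r = 0 \/ q = 3 /\ r = 1)%N by lia.
    by case => [[-> ->]|[-> ->]]; convex_close a ha.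
  + have : (q = 2 /\ r = 0 \/ q = 1 /\ r = 2)%N by lia.
    by case => [[-> ->]|[-> ->]]; convex_close a ha.
  + have : (q = 1 /\ r = 1)%N by lia.
    by case => [-> ->]; convex_close a ha.
Qed.

Lemma bound4 (R : realFieldType) (a : R) (ha : 1 < a) N (e : rel 'I_N)
  (Hirr : forall x, ~~ e x x) (Hsym : forall x y, e x y = e y x) :
  forall S : {set 'I_N}, (5 <= #|S|)%N -> ConnS e S ->
      (\sum_(v in S) dS e S v = 2 * (#|S| - 1 + 4))%N ->
      \sum_(v in S) gg a (dS e S v) <= B4 a #|S|.
Proof.
apply: (boundk ha Hirr Hsym); first by right.
- move=> n hn; case: (eqVneq n 6) => [->|n6].
    rewrite /B4 /=; exact: poly4 ha.
  rewrite /B4; have -> : (n.-1 == 5%N) = false by apply/eqP; lia.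
  have -> : (n == 5%N) = false by apply/eqP; lia.
  by rewrite Tb_step //; lia.
- move=> n; lia.
- move=> n q r h1 h2 h3 h4 h5; case: (leqP 9 n) => h.
    rewrite /B4; have -> : (n == 5%N) = false by apply/eqP; lia.
    apply: uncapped => //; lia.
  have : (n = 5 \/ n = 6 \/ n = 7 \/ n = 8)%N by lia.
  case => [En|[En|[En|En]]]; subst n; rewrite /B4 /=.
  + have : (q = 3 /\ r = 0 \/ q = 2 /\ r = 2)%N by lia.
    by case => [[-> ->]|[-> ->]]; convex_close a ha.
  + have : (q = 2 /\ r = 0 \/ q = 1 /\ r = 3)%N by lia.
    by case => [[-> ->]|[-> ->]]; convex_close a ha.
  + have : (q = 1 /\ r = 2)%N by lia.
    by case => [-> ->]; convex_close a ha.
  + have : (q = 1 /\ r = 1)%N by lia.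
    by case => [-> ->]; convex_close a ha.
Qed.

Definition sjn (k i j : nat) : bool := (i != j) &&
    [|| (i == 0)%N, (j == 0)%N, (i == 1)%N && (2 <= j <= k.+1)%N
      | (j == 1)%N && (2 <= i <= k.+1)%N].

Lemma sj_val n k (x y : 'I_n) : star_join n k x y = sjn k x y.
Proof. by []. Qed.

Lemma card_val n (P : pred nat) :
  #|[set y : 'I_n | P (val y)]| = (\sum_(0 <= j < n) P j)%N.
Proof.
rewrite -sum1_card big_mkcond big_mkord /=.
by apply: eq_bigr => y _; rewrite inE; case: (P y).
Qed.

Lemma cnt_int0 n m1 m2 : (m1 <= m2)%N ->
  (\sum_(0 <= j < n) (m1 <= j < m2)%N = minn n m2 - minn n m1)%N.
Proof.
move=> h1; elim: n => [|n IH]; first by rewrite big_geq //; lia.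
rewrite big_nat_recr //= IH; lia.
Qed.

Lemma cnt_int n m1 m2 : (m1 <= m2)%N -> (m2 <= n)%N ->
  (\sum_(0 <= j < n) (m1 <= j < m2)%N = m2 - m1)%N.
Proof. move=> h1 h2; rewrite cnt_int0 //; lia. Qed.

Lemma cnt_two n m : (2 <= m)%N ->
  (\sum_(0 <= j < n) ((j < 1)%N + (2 <= j < m)%N) = minn n 1 + (minn n m - minn n 2))%N.
Proof.
move=> h1; elim: n => [|n IH]; first by rewrite big_geq //; lia.
rewrite big_nat_recr //= IH; lia.
Qed.

Definition Dk (n k i : nat) : nat :=
  if i == 0%N then n.-1 else if i == 1%N then k.+1 else if (i <= k.+1)%N then 2%N else 1%N.

Lemma deg_sj n k (v : 'I_n) : (k.+2 <= n)%N -> deg (star_join n k) v = Dk n k v.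
Proof.
move=> hn; rewrite /deg.
have -> : [set y | star_join n k v y] = [set y : 'I_n | sjn k v (val y)].
  by apply/setP => y; rewrite !inE.
rewrite (@card_val n (fun j => sjn k v j)) /Dk.
case: v => v vn /=.
case: (eqVneq v 0) => [v0|v0].
  have -> : (\sum_(0 <= j < n) sjn k v j = \sum_(0 <= j < n) (1 <= j < n)%N)%N.
    by apply: eq_big_nat => j hj; rewrite /sjn v0; lia.
  rewrite cnt_int //; lia.
case: (eqVneq v 1) => [v1|v1].
  have -> : (\sum_(0 <= j < n) sjn k v j = \sum_(0 <= j < n) ((j < 1)%N + (2 <= j < k.+2)%N))%N.
    by apply: eq_big_nat => j hj; rewrite /sjn v1; lia.
  rewrite cnt_two //; lia.
case: (leqP v k.+1) => hv.
  have -> : (\sum_(0 <= j < n) sjn k v j = \sum_(0 <= j < n) (0 <= j < 2)%N)%N.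
    by apply: eq_big_nat => j hj; rewrite /sjn; lia.
  rewrite cnt_int //; lia.
have -> : (\sum_(0 <= j < n) sjn k v j = \sum_(0 <= j < n) (0 <= j < 1)%N)%N.
  by apply: eq_big_nat => j hj; rewrite /sjn; lia.
rewrite cnt_int //; lia.
Qed.

Lemma tail_R (R : realFieldType) (a : R) k n :
  \sum_(2 <= i < n) gg a (if (i <= k.+1)%N then 2%N else 1%N) =
  (minn n k.+2 - 2)%:R * gg a 2 + (n - k.+2)%:R * gg a 1.
Proof.
elim: n => [|n IH]; first by rewrite big_geq // !mul0r addr0.
case: (leqP 2 n) => h2; last first.
  rewrite big_geq //; have -> : (minn n.+1 k.+2 - 2 = 0)%N by lia.
  have -> : (n.+1 - k.+2 = 0)%N by lia.
  by rewrite !mul0r addr0.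
rewrite big_nat_recr //= IH.
case: (leqP n k.+1) => hk.
  have -> : (minn n.+1 k.+2 - 2 = (minn n k.+2 - 2).+1)%N by lia.
  have -> : (n.+1 - k.+2 = n - k.+2)%N by lia.
  rewrite mulrSr; lra.
have -> : (minn n.+1 k.+2 - 2 = minn n k.+2 - 2)%N by lia.
have -> : (n.+1 - k.+2 = (n - k.+2).+1)%N by lia.
rewrite mulrSr; lra.
Qed.

Lemma tail_N k n :
  (\sum_(2 <= i < n) (if (i <= k.+1)%N then 2%N else 1%N) =
  2 * (minn n k.+2 - 2) + (n - k.+2))%N.
Proof.
elim: n => [|n IH]; first by rewrite big_geq.
case: (leqP 2 n) => h2; last by rewrite big_geq //; lia.
rewrite big_nat_recr //= IH; case: (leqP n k.+1) => hk; lia.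
Qed.

Lemma sum_Dk_split (V : nmodType) (F : nat -> V) n k : (k.+2 <= n)%N ->
  \sum_(0 <= i < n) F (Dk n k i) =
  F n.-1 + F k.+1 + \sum_(2 <= i < n) F (if (i <= k.+1)%N then 2%N else 1%N).
Proof.
move=> hn; rewrite big_ltn; last by lia.
rewrite big_ltn; last by lia.
rewrite /Dk /= addrA; congr (_ + _).
apply: eq_big_nat => i hi; have -> : (i == 0)%N = false by lia.
by have -> : (i == 1)%N = false by lia.
Qed.

Lemma star_simple n k : simple_graph (star_join n k).
Proof.
split; first by move=> x; rewrite /star_join eqxx.
move=> x y; rewrite !sj_val /sjn; lia.
Qed.

Lemma star_conn n k : (0 < n)%N -> connected_graph (star_join n k).
Proof.
move=> hn; pose o := Ordinal hn.
have to : forall x, connect (star_join n k) x o.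
  move=> x; case: (eqVneq x o) => [->|xo]; first exact: connect0.
  apply: connect1; rewrite /star_join xo /=; by rewrite orbT.
have from : forall y, connect (star_join n k) o y.
  move=> y; case: (eqVneq o y) => [->|oy]; first exact: connect0.
  by apply: connect1; rewrite /star_join oy.
move=> x y; exact: connect_trans (to x) (from y).
Qed.

Lemma star_deg_sum n k : (k.+2 <= n)%N ->
  (\sum_(v : 'I_n) deg (star_join n k) v = 2 * (n - 1 + k))%N.
Proof.
move=> hn.
rewrite (eq_bigr (fun v : 'I_n => Dk n k v)); last by move=> v _; rewrite deg_sj.
rewrite -(big_mkord xpredT (fun i => Dk n k i)).
rewrite (sum_Dk_split (fun x => x)) // tail_N /=; lia.
Qed.

Lemma star_nedges n k : (k.+2 <= n)%N -> nedges (star_join n k) = (n - 1 + k)%N.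
Proof.
move=> hn; have [h1 h2] := star_simple n k.
have := handshake h1 h2; rewrite star_deg_sum //; lia.
Qed.

Lemma star_SEI (R : realFieldType) (a : R) n k : (k.+2 <= n)%N ->
  SEI a (star_join n k) = Tb a k n.
Proof.
move=> hn; have [h1 h2] := star_simple n k.
rewrite (SEI_sum a h1 h2).
rewrite (eq_bigr (fun v : 'I_n => gg a (Dk n k v))); last first.
  by move=> v _; rewrite deg_sj.
rewrite -(big_mkord xpredT (fun i => gg a (Dk n k i))).
rewrite (sum_Dk_split (gg a)) // tail_R /Tb.
have -> : (minn n k.+2 - 2 = k)%N by lia.
have -> : (n - 2 - k = n - k.+2)%N by lia.
lra.
Qed.

Lemma final_gen (R : realFieldType) (a : R) (ha : 1 < a) k n n1 (B : nat -> R)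
 (Hb : forall N (e : rel 'I_N), (forall x, ~~ e x x) -> (forall x y, e x y = e y x) ->
    forall S : {set 'I_N}, (n1 <= #|S|)%N -> ConnS e S ->
    (\sum_(v in S) dS e S v = 2 * (#|S| - 1 + k))%N ->
    \sum_(v in S) gg a (dS e S v) <= B #|S|)
 (hn : (k.+2 <= n)%N) (hn1 : (n1 <= n)%N) (HB : B n = Tb a k n) :
 max_SEI_in_class a k (star_join n k).
Proof.
split.
  split; first exact: star_simple.
  split; [apply: star_conn; lia | exact: star_nedges].
move=> e [[Hirr Hsym] [Hc Hne]].
rewrite star_SEI // -HB (SEI_sum a Hirr Hsym).
have E : forall v, dS e setT v = deg e v.
  by move=> v; rewrite /dS /deg; apply: eq_card => y; rewrite !inE.
have cT : #|[set: 'I_n]| = n by rewrite cardsT card_ord.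
have Hs : (\sum_(v in [set: 'I_n]) dS e setT v = 2 * (#|[set: 'I_n]| - 1 + k))%N.
  rewrite cT -Hne -(handshake Hirr Hsym).
  by apply: eq_big => v; rewrite ?inE // => _; rewrite E.
have := Hb n e Hirr Hsym setT ltac:(by rewrite cT) (conn_setT Hc) Hs.
rewrite cT => h; apply: le_trans h.
rewrite le_eqVlt; apply/orP; left; apply/eqP.
by apply: eq_big => v; rewrite ?inE // => _; rewrite E.
Qed.

Lemma small1 (R : realFieldType) (a : R) : max_SEI_in_class a 0 (star_join 1 0).
Proof.
have ne0 : forall e : rel 'I_1, nedges e = 0%N.
  move=> e; apply/eqP; rewrite cards_eq0; apply/eqP/setP => -[[i hi] [j hj]].
  rewrite !inE /=; apply/negP => /andP [hij _]; lia.
have S0 : forall e : rel 'I_1, SEI a e = 0.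
  move=> e; rewrite /SEI big_pred0 // => -[[i hi] [j hj]] /=.
  apply/negP => /andP [hij _]; lia.
split.
  split; first exact: star_simple.
  by split; [apply: star_conn | rewrite ne0].
by move=> e _; rewrite !S0.
Qed.

Unset Implicit Arguments.

Theorem theorem8 (R : realFieldType) (a : R) (ha : 1 < a) :
  (forall n : nat, (1 <= n)%N -> max_SEI_in_class a 0 (star_graph n)) /\
  (forall n : nat, (3 <= n)%N -> max_SEI_in_class a 1 (star_plus n)) /\
  (forall n : nat, (4 <= n)%N -> max_SEI_in_class a 2 (B1_graph n)) /\
  (forall n : nat, (5 <= n)%N -> max_SEI_in_class a 3 (G4_graph n)) /\
  (forall n : nat, (6 <= n)%N -> max_SEI_in_class a 4 (H4_graph n)).
Proof.
split.
  move=> n hn; case: (eqVneq n 1) => [->|n1]; first exact: small1.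
  apply: (final_gen (n1 := 1) (B := B0 a) ha) => //.
  - move=> N e h1 h2. exact (bound0 ha h1 h2).
  - lia.
  - rewrite /B0 /Tb mul0r addr0.
    have -> : (n - 2 - 0 = n.-1 - 1)%N by lia.
    have [m ->] : exists m, n.-1 = m.+1 by exists n.-2; lia.
    rewrite subn1 /= mulrSr; lra.
split.
  move=> n hn; apply: (final_gen (n1 := 3) (B := Tb a 1) ha) => //.
  move=> N e h1 h2; exact (bound1 ha h1 h2).
split.
  move=> n hn; apply: (final_gen (n1 := 4) (B := Tb a 2) ha) => //.
  move=> N e h1 h2; exact (bound2 ha h1 h2).
split.
  move=> n hn; apply: (final_gen (n1 := 4) (B := B3 a) ha) => //.
  - move=> N e h1 h2; exact (bound3 ha h1 h2).
  - lia.
  - by rewrite /B3; have -> : (n == 4%N) = false by apply/eqP; lia.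
move=> n hn; apply: (final_gen (n1 := 5) (B := B4 a) ha) => //.
- move=> N e h1 h2; exact (bound4 ha h1 h2).
- lia.
- by rewrite /B4; have -> : (n == 5%N) = false by apply/eqP; lia.
Qed.
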